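(* The compactness theorem holds for quantified propositional team logic $\mathrm{QPTL}$.
   Context: $\mathrm{QPTL}$ is $\mathcal{Q}(\mathrm{QBF})$: the closure of quantified Boolean formulas under strong negation $\sim$, material implication (written $\Rightarrow$; true iff the team falsifies the antecedent or satisfies the consequent), linear implication $\multimap$ (lax splitting of teams) and the team quantifiers $\forall x$ (duplicating team, $x$ takes both values $0,1$) and $!x$ (all supplementing functions into $\mathfrak{P}(\{0,1\})\setminus\{\emptyset\}$), interpreted on teams of propositional assignments. It follows from the soundness and completeness of the system $\mathsf{H}^0\mathsf{XLSQ}$ for $\mathrm{QPTL}$, where $\mathsf{X}$ is the expansion axiom $\forall x\alpha\leftrightarrow(\alpha[x/\top]\wedge\alpha[x/\bot])$. *)

(* Defs.v *)
From Stdlib Require Import List Arith Bool.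
Import ListNotations.

Definition assignment := nat -> bool.
Definition team := assignment -> Prop.

Definition upd (s : assignment) (x : nat) (a : bool) : assignment :=
  fun y => if Nat.eqb y x then a else s y.

Inductive qbf : Type :=
| QVar : nat -> qbf
| QTop : qbf
| QBot : qbf
| QNeg : qbf -> qbf
| QAnd : qbf -> qbf -> qbf
| QOr : qbf -> qbf -> qbf
| QForall : nat -> qbf -> qbf
| QExists : nat -> qbf -> qbf.

Fixpoint qbf_eval (a : qbf) (s : assignment) : bool :=
  match a with
  | QVar x => s x
  | QTop => true
  | QBot => false
  | QNeg b => negb (qbf_eval b s)
  | QAnd b c => qbf_eval b s && qbf_eval c s
  | QOr b c => qbf_eval b s || qbf_eval c s
  | QForall x b => qbf_eval b (upd s x false) && qbf_eval b (upd s x true)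
  | QExists x b => qbf_eval b (upd s x false) || qbf_eval b (upd s x true)
  end.

Inductive qptl : Type :=
| TAtom : qbf -> qptl
| TSNeg : qptl -> qptl
| TImp : qptl -> qptl -> qptl
| TLin : qptl -> qptl -> qptl
| TForall : nat -> qptl -> qptl
| TShriek : nat -> qptl -> qptl.

Definition dup_team (X : team) (x : nat) : team :=
  fun t => exists s a, X s /\ forall y, t y = upd s x a y.

Definition supp_team (X : team) (F : assignment -> bool -> Prop) (x : nat) : team :=
  fun t => exists s a, X s /\ F s a /\ forall y, t y = upd s x a y.

Fixpoint tsat (phi : qptl) (X : team) : Prop :=
  match phi with
  | TAtom a => forall s, X s -> qbf_eval a s = true
  | TSNeg p => ~ tsat p X
  | TImp p q => ~ tsat p X \/ tsat q X
  | TLin p q => forall Y Z : team,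
      (forall s, X s <-> (Y s \/ Z s)) -> tsat p Y -> tsat q Z
  | TForall x p => tsat p (dup_team X x)
  | TShriek x p => forall F : assignment -> bool -> Prop,
      (forall s, X s -> exists a, F s a) -> tsat p (supp_team X F x)
  end.

Definition entails (Gamma : qptl -> Prop) (phi : qptl) : Prop :=
  forall X : team, (forall psi, Gamma psi -> tsat psi X) -> tsat phi X.

(* Main.v *)
Require Import Defs.
From Stdlib Require Import List Arith Lia Classical ClassicalEpsilon.
Import ListNotations.

Fixpoint qfv (a : qbf) : list nat :=
  match a with
  | QVar x => [x]
  | QTop | QBot => []
  | QNeg b => qfv b
  | QAnd b c | QOr b c => qfv b ++ qfv c
  | QForall x b | QExists x b => filter (fun y => negb (Nat.eqb y x)) (qfv b)
  end.

Fixpoint tfv (p : qptl) : list nat :=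
  match p with
  | TAtom a => qfv a
  | TSNeg p => tfv p
  | TImp p q | TLin p q => tfv p ++ tfv q
  | TForall x p | TShriek x p => filter (fun y => negb (Nat.eqb y x)) (tfv p)
  end.

Definition agreeV (V : nat -> Prop) (s t : assignment) := forall y, V y -> s y = t y.
Definition simV (V : nat -> Prop) (X Y : team) :=
  (forall s, X s -> exists t, Y t /\ agreeV V s t) /\
  (forall t, Y t -> exists s, X s /\ agreeV V s t).

Lemma agree_upd V s t x a : agreeV V s t ->
  agreeV (fun y => y = x \/ V y) (upd s x a) (upd t x a).
Proof.
  unfold agreeV, upd; intros H y Hy; destruct (Nat.eqb y x) eqn:E; auto.
  destruct Hy as [Hy|Hy]; [subst; rewrite Nat.eqb_refl in E; discriminate | auto].
Qed.

Lemma cover_filter (V : nat -> Prop) x l :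
  (forall y, In y (filter (fun y => negb (Nat.eqb y x)) l) -> V y) ->
  forall y, In y l -> y = x \/ V y.
Proof.
  intros H y Hy; destruct (Nat.eqb y x) eqn:E.
  - left; apply Nat.eqb_eq; auto.
  - right; apply H; apply filter_In; rewrite E; auto.
Qed.

Lemma qbf_loc : forall a V s t, (forall y, In y (qfv a) -> V y) -> agreeV V s t ->
  qbf_eval a s = qbf_eval a t.
Proof.
  induction a; intros V s t Hc Ha; simpl in *.
  - apply Ha, Hc; auto.
  - auto.
  - auto.
  - rewrite (IHa V s t Hc Ha); auto.
  - rewrite (IHa1 V s t (fun y h => Hc y (in_or_app _ _ _ (or_introl h))) Ha).
    rewrite (IHa2 V s t (fun y h => Hc y (in_or_app _ _ _ (or_intror h))) Ha). auto.
  - rewrite (IHa1 V s t (fun y h => Hc y (in_or_app _ _ _ (or_introl h))) Ha).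
    rewrite (IHa2 V s t (fun y h => Hc y (in_or_app _ _ _ (or_intror h))) Ha). auto.
  - rewrite (IHa _ (upd s n false) (upd t n false) (cover_filter _ _ _ Hc) (agree_upd _ _ _ _ _ Ha)).
    rewrite (IHa _ (upd s n true) (upd t n true) (cover_filter _ _ _ Hc) (agree_upd _ _ _ _ _ Ha)).
    auto.
  - rewrite (IHa _ (upd s n false) (upd t n false) (cover_filter _ _ _ Hc) (agree_upd _ _ _ _ _ Ha)).
    rewrite (IHa _ (upd s n true) (upd t n true) (cover_filter _ _ _ Hc) (agree_upd _ _ _ _ _ Ha)).
    auto.
Qed.

Lemma agree_sym V s t : agreeV V s t -> agreeV V t s.
Proof. unfold agreeV; intros H y Hy; symmetry; auto. Qed.
Lemma agree_trans V s t u : agreeV V s t -> agreeV V t u -> agreeV V s u.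
Proof. unfold agreeV; intros H H' y Hy; rewrite H; auto. Qed.
Lemma agree_mono (V W : nat -> Prop) s t : (forall y, V y -> W y) -> agreeV W s t -> agreeV V s t.
Proof. unfold agreeV; auto. Qed.

Lemma simV_sym V X Y : simV V X Y -> simV V Y X.
Proof.
  intros [H1 H2]; split.
  - intros t Ht; destruct (H2 t Ht) as [s [Hs Ha]]; exists s; split; auto using agree_sym.
  - intros s Hs; destruct (H1 s Hs) as [t [Ht Ha]]; exists t; split; auto using agree_sym.
Qed.
Lemma simV_refl V X : simV V X X.
Proof. split; intros s Hs; exists s; split; auto; intros y _; auto. Qed.
Lemma simV_trans V X Y Z : simV V X Y -> simV V Y Z -> simV V X Z.
Proof.
  intros [H1 H2] [H3 H4]; split.
  - intros s Hs; destruct (H1 s Hs) as [t [Ht Ha]]; destruct (H3 t Ht) as [u [Hu Hb]].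
    exists u; split; eauto using agree_trans.
  - intros u Hu; destruct (H4 u Hu) as [t [Ht Ha]]; destruct (H2 t Ht) as [s [Hs Hb]].
    exists s; split; eauto using agree_trans.
Qed.
Lemma simV_mono (V W : nat -> Prop) X Y : (forall y, V y -> W y) -> simV W X Y -> simV V X Y.
Proof.
  intros HVW [H1 H2]; split.
  - intros s Hs; destruct (H1 s Hs) as [t [Ht Ha]]; exists t; split; eauto using agree_mono.
  - intros t Ht; destruct (H2 t Ht) as [s [Hs Ha]]; exists s; split; eauto using agree_mono.
Qed.

Lemma sim_dup V X Y x : simV V X Y -> simV (fun y => y = x \/ V y) (dup_team X x) (dup_team Y x).
Proof.
  intros [H1 H2]; split.
  - intros t [s [a [Hs Ht]]]. destruct (H1 s Hs) as [s' [Hs' Ha]].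
    exists (upd s' x a); split.
    + exists s', a; split; auto.
    + intros y Hy; rewrite Ht; apply (agree_upd _ _ _ _ a Ha); auto.
  - intros t [s' [a [Hs' Ht]]]. destruct (H2 s' Hs') as [s [Hs Ha]].
    exists (upd s x a); split.
    + exists s, a; split; auto.
    + intros y Hy; rewrite Ht; apply (agree_upd _ _ _ _ a Ha); auto.
Qed.

Lemma tsat_loc : forall phi V, (forall y, In y (tfv phi) -> V y) ->
  forall X Y, simV V X Y -> tsat phi X -> tsat phi Y.
Proof.
  induction phi; intros V Hc X Y HS HX; simpl in *.
  - intros t Ht. destruct HS as [_ H2]. destruct (H2 t Ht) as [s [Hs Ha]].
    rewrite <- (qbf_loc q V s t Hc Ha); auto.
  - intro HY; apply HX; apply (IHphi V Hc Y X (simV_sym _ _ _ HS) HY).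
  - assert (Hc1 : forall y, In y (tfv phi1) -> V y) by (intros; apply Hc, in_or_app; auto).
    assert (Hc2 : forall y, In y (tfv phi2) -> V y) by (intros; apply Hc, in_or_app; auto).
    destruct HX as [HX|HX].
    + left; intro HY; apply HX; apply (IHphi1 V Hc1 Y X (simV_sym _ _ _ HS) HY).
    + right; apply (IHphi2 V Hc2 X Y HS HX).
  - assert (Hc1 : forall y, In y (tfv phi1) -> V y) by (intros; apply Hc, in_or_app; auto).
    assert (Hc2 : forall y, In y (tfv phi2) -> V y) by (intros; apply Hc, in_or_app; auto).
    intros Y1' Z1' Hsplit HY1'.
    destruct HS as [H1 H2].
    set (Y1 := fun s => X s /\ exists s', Y1' s' /\ agreeV V s s').
    set (Z1 := fun s => X s /\ exists s', Z1' s' /\ agreeV V s s').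
    assert (HsY : simV V Y1 Y1').
    { split.
      - intros s [_ [s' [H Ha]]]; exists s'; auto.
      - intros s' Hs'. assert (Y s') by (apply Hsplit; auto).
        destruct (H2 s' H) as [s [Hs Ha]]. exists s; split; auto. split; auto. exists s'; auto. }
    assert (HsZ : simV V Z1 Z1').
    { split.
      - intros s [_ [s' [H Ha]]]; exists s'; auto.
      - intros s' Hs'. assert (Y s') by (apply Hsplit; auto).
        destruct (H2 s' H) as [s [Hs Ha]]. exists s; split; auto. split; auto. exists s'; auto. }
    apply (IHphi2 V Hc2 Z1 Z1' HsZ).
    apply (HX Y1 Z1).
    + intro s; split.
      * intro Hs. destruct (H1 s Hs) as [s' [Hs' Ha]].
        apply Hsplit in Hs'. destruct Hs' as [Hs'|Hs'].
        -- left; split; auto; exists s'; auto.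
        -- right; split; auto; exists s'; auto.
      * intros [[Hs _]|[Hs _]]; auto.
    + apply (IHphi1 V Hc1 Y1' Y1 (simV_sym _ _ _ HsY) HY1').
  - apply (IHphi _ (cover_filter _ _ _ Hc) _ _ (sim_dup _ _ _ n HS) HX).
  - intros F' HF'.
    destruct HS as [H1 H2].
    set (F := fun s a => exists s', Y s' /\ agreeV V s s' /\ F' s' a).
    assert (HF : forall s, X s -> exists a, F s a).
    { intros s Hs. destruct (H1 s Hs) as [s' [Hs' Ha]]. destruct (HF' s' Hs') as [a Hfa].
      exists a, s'; auto. }
    apply (IHphi _ (cover_filter _ _ _ Hc) (supp_team X F n) _); [| apply HX; auto].
    split.
    + intros t [s [a [Hs [[s' [Hs' [Ha Hfa]]] Ht]]]].
      exists (upd s' n a); split.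
      * exists s', a; auto.
      * intros y Hy; rewrite Ht; apply (agree_upd _ _ _ _ a Ha); auto.
    + intros t [s' [a [Hs' [Hfa Ht]]]].
      destruct (H2 s' Hs') as [s [Hs Ha]].
      exists (upd s n a); split.
      * exists s, a; split; auto. split; auto. exists s'; auto.
      * intros y Hy; rewrite Ht; apply (agree_upd _ _ _ _ a Ha); auto.
Qed.

Definition pref (s : assignment) (n : nat) : list bool := map s (seq 0 n).

Lemma pref_agree s t n : pref s n = pref t n -> forall y, y < n -> s y = t y.
Proof.
  induction n; intros H y Hy; [lia|].
  unfold pref in H; rewrite seq_S, !map_app in H. simpl in H.
  apply app_inj_tail in H; destruct H as [H H'].
  destruct (Nat.eq_dec y n); [subst; auto|]. apply IHn; auto; lia.
Qed.

Fixpoint allvecs (n : nat) : list (list bool) :=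
  match n with
  | 0 => [[]]
  | S n => flat_map (fun v => [v ++ [false]; v ++ [true]]) (allvecs n)
  end.

Lemma pref_in s n : In (pref s n) (allvecs n).
Proof.
  induction n; simpl; auto.
  apply in_flat_map. exists (pref s n); split; auto.
  unfold pref; rewrite seq_S, map_app; simpl.
  destruct (s n); simpl; auto.
Qed.

Fixpoint pow {A} (l : list A) : list (list A) :=
  match l with
  | [] => [[]]
  | v :: l => pow l ++ map (cons v) (pow l)
  end.

Lemma pow_sel {A} (L : list A) (P : A -> Prop) :
  exists C, In C (pow L) /\ forall v, In v C <-> (In v L /\ P v).
Proof.
  induction L as [|v L IH].
  - exists []; simpl; split; auto; intuition.
  - destruct IH as [C [HC HCs]].
    destruct (classic (P v)) as [Hp|Hp].
    + exists (v :: C); split.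
      * simpl; apply in_or_app; right; apply in_map; auto.
      * intro w; simpl; rewrite HCs; split.
        -- intros [->|[]]; auto.
        -- intros [[->|H] HP]; auto.
    + exists C; split.
      * simpl; apply in_or_app; auto.
      * intro w; rewrite HCs; simpl; split.
        -- intros []; auto.
        -- intros [[->|H] HP]; [contradiction|auto].
Qed.

Lemma finite_classes n : exists Ts : list team,
  forall X, exists T, In T Ts /\ simV (fun y => y < n) X T.
Proof.
  exists (map (fun C => fun s => In (pref s n) C) (pow (allvecs n))).
  intro X.
  destruct (pow_sel (allvecs n) (fun v => exists s, X s /\ pref s n = v)) as [C [HC HCs]].
  exists (fun s => In (pref s n) C); split.
  - apply in_map_iff; exists C; auto.
  - split.
    + intros s Hs; exists s; split.
      * apply HCs; split; [apply pref_in | exists s; auto].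
      * intros y _; auto.
    + intros t Ht. apply HCs in Ht. destruct Ht as [_ [s [Hs Hp]]].
      exists s; split; auto. intros y Hy; apply pref_agree with n; auto.
Qed.

Definition fvb (p : qptl) : nat := fold_right (fun y m => max (S y) m) 0 (tfv p).

Lemma fvb_spec_l l y : In y l -> y < fold_right (fun y m => max (S y) m) 0 l.
Proof. induction l; cbn [fold_right In]; [tauto|]. intros [->|H]; [lia|]. specialize (IHl H); lia. Qed.

Lemma fvb_spec p y : In y (tfv p) -> y < fvb p.
Proof. apply fvb_spec_l. Qed.

Section Main.
Variable Gamma : qptl -> Prop.
Variable phi : qptl.

Definition N0 := fvb phi.
Definition EE (k : nat) := simV (fun y => y < k + N0).
Definition Good (k : nat) (X : team) :=
  (forall psi, Gamma psi -> fvb psi <= k + N0 -> tsat psi X) /\ ~ tsat phi X.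

Lemma EE_mono j k X Y : j <= k -> EE k X Y -> EE j X Y.
Proof. intros H; apply simV_mono; intros; lia. Qed.

Lemma Good_inv k X Y : Good k X -> EE k X Y -> Good k Y.
Proof.
  intros [H1 H2] HE; split.
  - intros psi Hg Hb. apply (tsat_loc psi (fun y => y < k + N0)) with X; auto.
    intros y Hy; apply fvb_spec in Hy; lia.
  - intro HY; apply H2. apply (tsat_loc phi (fun y => y < k + N0)) with Y; auto.
    + intros y Hy; apply fvb_spec in Hy; unfold N0; lia.
    + apply simV_sym; auto.
Qed.

Lemma Good_mono k m X : k <= m -> Good m X -> Good k X.
Proof. intros H [H1 H2]; split; auto. intros; apply H1; auto; lia. Qed.

Lemma allgood :
  entails Gamma phi ->
  ~ (exists Delta : list qptl,
      (forall psi, In psi Delta -> Gamma psi) /\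
      entails (fun psi => In psi Delta) phi) ->
  forall k, exists X, Good k X.
Proof.
  intros Hent HN k. apply NNPP; intro Hno.
  destruct (finite_classes (k + N0)) as [Ts HTs].
  assert (HD : forall Ts' : list team, (forall T, In T Ts' -> ~ Good k T) ->
     exists Delta, (forall psi, In psi Delta -> Gamma psi /\ fvb psi <= k + N0) /\
       forall T, In T Ts' -> tsat phi T \/ exists psi, In psi Delta /\ ~ tsat psi T).
  { induction Ts' as [|T Ts' IH]; intros Hbad.
    - exists []; simpl; split; tauto.
    - destruct IH as [D [HD1 HD2]]; [intros; apply Hbad; simpl; auto|].
      assert (HT : ~ Good k T) by (apply Hbad; simpl; auto).
      destruct (classic (tsat phi T)) as [Hp|Hp].
      + exists D; split; auto. intros T' [<-|H]; auto.
      + assert (exists psi, Gamma psi /\ fvb psi <= k + N0 /\ ~ tsat psi T) as [psi [Hg [Hb Hs]]].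
        { apply NNPP; intro H; apply HT; split; auto.
          intros psi Hg Hb; apply NNPP; intro Hs; apply H; eauto. }
        exists (psi :: D); split.
        * intros psi' [<-|H]; auto.
        * intros T' [<-|H].
          -- right; exists psi; simpl; auto.
          -- destruct (HD2 T' H) as [H'|[psi' [H1 H2]]]; auto. right; exists psi'; simpl; auto. }
  destruct (HD Ts) as [D [HD1 HD2]].
  { intros T _ HT; apply Hno; eauto. }
  apply HN; exists D; split; [intros; apply HD1; auto|].
  intros X HX. destruct (HTs X) as [T [HinT HsT]].
  destruct (HD2 T HinT) as [Hp|[psi [Hin Hs]]].
  - apply (tsat_loc phi (fun y => y < k + N0)) with T; auto.
    + intros y Hy; apply fvb_spec in Hy; unfold N0; lia.
    + apply simV_sym; auto.
  - exfalso; apply Hs. apply (tsat_loc psi (fun y => y < k + N0)) with X; auto.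
    destruct (HD1 psi Hin) as [_ Hb]. intros y Hy; apply fvb_spec in Hy; lia.
Qed.

Lemma bound (B : nat -> team -> Prop) :
  (forall m m' T, m <= m' -> B m T -> B m' T) ->
  forall (Ts : list team) k, (forall T, In T Ts -> exists m, k <= m /\ B m T) ->
  exists M, k <= M /\ forall T, In T Ts -> B M T.
Proof.
  intros Hmon; induction Ts as [|T Ts IH]; intros k H.
  - exists k; split; auto; simpl; tauto.
  - destruct IH with k as [M [HM1 HM2]]; [intros; apply H; simpl; auto|].
    destruct (H T (or_introl eq_refl)) as [m [Hm1 Hm2]].
    exists (max m M); split; [lia|].
    intros T' [<-|HT'].
    + apply Hmon with m; [lia|auto].
    + apply Hmon with M; [lia|auto].
Qed.

Definition Ext k X := forall m, k <= m -> exists Y, Good m Y /\ EE k Y X.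

Lemma Ext_Good k X : Ext k X -> Good k X.
Proof.
  intros H; destruct (H k (le_n k)) as [Y [HY HE]]. eapply Good_inv; eauto.
Qed.

Section Kon.
Hypothesis AG : forall k, exists X, Good k X.

Lemma ext_base : exists X, Ext 0 X.
Proof.
  apply NNPP; intro Hno.
  destruct (finite_classes (0 + N0)) as [Ts HTs].
  destruct (bound (fun m T => forall Y, Good m Y -> ~ EE 0 Y T)) with Ts 0 as [M [_ HM]].
  - intros m m' T Hle H Y HY; apply H; eapply Good_mono; eauto.
  - intros T _. apply NNPP; intro H. apply Hno; exists T. intros m _.
    apply NNPP; intro H'. apply H; exists m; split; [lia|].
    intros Y HY HE; apply H'; eauto.
  - destruct (AG M) as [Y HY]. destruct (HTs Y) as [T [HT HE]].
    apply (HM T HT Y HY HE).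
Qed.

Lemma ext_step k X : Ext k X -> exists X', Ext (S k) X' /\ EE k X' X.
Proof.
  intros HX; apply NNPP; intro Hno.
  destruct (finite_classes (S k + N0)) as [Ts HTs].
  destruct (bound (fun m T => EE k T X -> forall Y, Good m Y -> ~ EE (S k) Y T)) with Ts (S k)
    as [M [HM0 HM]].
  - intros m m' T Hle H HT Y HY; apply H; auto; eapply Good_mono; eauto.
  - intros T _. destruct (classic (EE k T X)) as [HTX|HTX].
    + apply NNPP; intro H. apply Hno; exists T; split; auto. intros m Hm.
      apply NNPP; intro H'. apply H; exists m; split; auto.
      intros _ Y HY HE; apply H'; eauto.
    + exists (S k); split; [auto|]. intros; contradiction.
  - destruct (HX M) as [Y [HY HYX]]; [lia|].
    destruct (HTs Y) as [T [HT HE]].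
    refine (HM T HT _ Y HY HE).
    apply simV_trans with Y; [apply simV_sym; eapply EE_mono; [|exact HE]; lia | auto].
Qed.


Lemma seq_exists : exists sq : nat -> team,
  (forall k, Ext k (sq k)) /\ (forall k, EE k (sq (S k)) (sq k)).
Proof.
  destruct ext_base as [X0 H0].
  assert (Hg : forall k X, exists X', Ext k X -> Ext (S k) X' /\ EE k X' X).
  { intros k X; destruct (classic (Ext k X)) as [H|H].
    - destruct (ext_step k X H) as [X' HX']; exists X'; auto.
    - exists X; intro; contradiction. }
  pose (g := fun k X => proj1_sig (constructive_indefinite_description _ (Hg k X))).
  assert (Hgs : forall k X, Ext k X -> Ext (S k) (g k X) /\ EE k (g k X) X).
  { intros k X; unfold g; destruct constructive_indefinite_description; simpl; auto. }
  exists (nat_rect (fun _ => team) X0 (fun k Xk => g k Xk)).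
  assert (HE : forall k, Ext k (nat_rect (fun _ => team) X0 (fun k Xk => g k Xk) k)).
  { induction k; simpl; auto. apply Hgs; auto. }
  split; auto. intro k; simpl; apply Hgs; auto.
Qed.
End Kon.

Lemma chain (sq : nat -> team) (Hs : forall k, EE k (sq (S k)) (sq k)) :
  forall j i, EE j (sq (i + j)) (sq j).
Proof.
  intros j; induction i; simpl.
  - apply simV_refl.
  - apply simV_trans with (sq (i + j)); auto.
    apply EE_mono with (i + j); [lia | apply Hs].
Qed.

Lemma limit (sq : nat -> team) (Hs : forall k, EE k (sq (S k)) (sq k)) :
  let L := fun s => forall k, exists t, sq k t /\ agreeV (fun y => y < k + N0) s t in
  forall k, EE k L (sq k).
Proof.
  intros L k; split.
  - intros s Hs'; apply Hs'.
  - intros t Ht.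
    assert (Hh : forall i u, exists u', sq (i + k) u ->
              sq (S i + k) u' /\ agreeV (fun y => y < i + k + N0) u' u).
    { intros i u. destruct (classic (sq (i + k) u)) as [Hu|Hu].
      - destruct (Hs (i + k)) as [_ H2]. destruct (H2 u Hu) as [u' [Hu' Ha]].
        exists u'; auto.
      - exists u; intro; contradiction. }
    pose (h := fun i u => proj1_sig (constructive_indefinite_description _ (Hh i u))).
    assert (Hhs : forall i u, sq (i + k) u ->
              sq (S i + k) (h i u) /\ agreeV (fun y => y < i + k + N0) (h i u) u).
    { intros i u; unfold h; destruct constructive_indefinite_description; simpl; auto. }
    pose (c := nat_rect (fun _ => assignment) t (fun i u => h i u)).
    assert (Hc : forall i, sq (i + k) (c i)).
    { induction i; simpl; auto. apply Hhs; auto. }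
    assert (Hcc : forall i d, agreeV (fun y => y < i + k + N0) (c (d + i)) (c i)).
    { intros i; induction d; simpl.
      - intros y _; auto.
      - apply agree_trans with (c (d + i)); auto.
        destruct (Hhs (d + i) (c (d + i)) (Hc _)) as [_ Ha].
        apply agree_mono with (fun y => y < d + i + k + N0); [intros; lia | exact Ha]. }
    set (s := fun y => c (S y) y).
    assert (Hsc : forall i, agreeV (fun y => y < i + k + N0) s (c i)).
    { intros i y Hy; unfold s. destruct (le_lt_dec (S y) i).
      - pose proof (Hcc (S y) (i - S y) y ltac:(cbv beta; lia)) as Hq.
        replace (i - S y + S y) with i in Hq by lia; auto.
      - pose proof (Hcc i (S y - i) y Hy) as Hq.
        replace (S y - i + i) with (S y) in Hq by lia; auto. }
    exists s; split.
    + intro j. pose proof (chain sq Hs j k) as Hch. destruct Hch as [H1 _].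
      rewrite Nat.add_comm in H1. destruct (H1 (c j) (Hc j)) as [t' [Ht' Ha]].
      exists t'; split; auto. apply agree_trans with (c j); auto.
      apply agree_mono with (fun y => y < j + k + N0); [intros; lia | apply Hsc].
    + apply (Hsc 0).
Qed.
End Main.

Theorem mainTheorem13 :
  forall (Gamma : qptl -> Prop) (phi : qptl),
    entails Gamma phi ->
    exists Delta : list qptl,
      (forall psi, In psi Delta -> Gamma psi) /\
      entails (fun psi => In psi Delta) phi.
Proof.
  intros Gamma phi H. apply NNPP; intro HN.
  pose proof (allgood Gamma phi H HN) as AG.
  destruct (seq_exists Gamma phi AG) as [sq [HE HS]].
  pose proof (limit phi sq HS) as HL. simpl in HL.
  set (L := fun s => forall k, exists t, sq k t /\ agreeV (fun y => y < k + N0 phi) s t) in HL.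
  assert (HG : forall k, Good Gamma phi k L).
  { intro k. apply Good_inv with (sq k).
    - apply Ext_Good; auto.
    - apply simV_sym, HL. }
  destruct (HG 0) as [_ Hn]. apply Hn. apply H.
  intros psi Hg. destruct (HG (fvb psi)) as [H1 _]. apply H1; auto; lia.
Qed.
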